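(* Assume the Dickson--Hardy--Littlewood conjecture: every admissible tuple $(h_1,\dots,h_k)$ of natural numbers is prime-producing. Then there exists an infinite set $B$ of primes such that $b+b'+1$ is prime for every pair of distinct $b,b' \in B$.
   Context: A tuple $(h_1,\dots,h_k)$ of natural numbers is admissible if for every prime $p$ there is at least one residue class mod $p$ containing none of $h_1,\dots,h_k$. A tuple $(h_1,\dots,h_k)$ is prime-producing if there are infinitely many integers $n$ such that $n+h_1,\dots,n+h_k$ are all prime. *)

(* Defs.v *)
From mathcomp Require Import all_boot.

Definition admissible (hs : seq nat) : Prop :=
  forall p : nat, prime p -> exists r : nat, r < p /\ all (fun h => h %% p != r) hs.

(* Infinitely many n with n + h_i all prime (n ranges over nat; since all h_i >= 0,
   only finitely many negative integers n could ever qualify, so this is equivalent). *)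
Definition prime_producing (hs : seq nat) : Prop :=
  forall N : nat, exists n : nat, N <= n /\ all (fun h => prime (n + h)) hs.

Definition DHL : Prop := forall hs : seq nat, admissible hs -> prime_producing hs.

Definition infinite_set (B : nat -> Prop) : Prop :=
  forall N : nat, exists b : nat, N <= b /\ B b.

(* Main.v *)
Require Import Defs.
From mathcomp Require Import all_boot zify.
Lemma modS2 b p : b %% p != 1 -> (b + 1) %% p != 2.
Proof.
move=> H; apply/eqP=> E; move/eqP: H; apply.
case: p E => [|p]; first by rewrite !modn0; lia.
rewrite -modnDml. have := ltn_pmod b (ltn0Sn p).
case: (ltngtP (b %% p.+1 + 1) p.+1) => [lt _|gt|eq].
- rewrite modn_small //; lia.
- lia.
- by rewrite eq modnn.
Qed.
Lemma modp1 {O p} : 0 < O -> p %| O -> O.-1 %% p = p.-1.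
Proof.
move=> O0 /dvdnP [k Ok]; subst O.
case: p O0 => [|p]; first by rewrite muln0.
case: k => [|k] // _.
have -> : (k.+1 * p.+1).-1 = k * p.+1 + p by rewrite mulSn; lia.
by rewrite modnMDl modn_small.
Qed.
Lemma count_res p (s : seq nat) : size s < p -> exists r, r < p /\ all (fun h => h %% p != r) s.
Proof.
move=> Hs.
case: (boolP (has (fun r => all (fun h => h %% p != r) s) (iota 0 p))).
  by move/hasP=> [r]; rewrite mem_iota add0n => /andP[_ ?] ?; exists r.
move/hasPn=> H; exfalso.
have : size (iota 0 p) <= size (map (fun h => h %% p) s).
  apply: uniq_leq_size; first exact: iota_uniq.
  move=> r Hr; have := H r Hr; move/allPn=> [h hs]; rewrite negbK => /eqP <-.
  exact: map_f.
by rewrite size_iota size_map leqNgt Hs.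
Qed.
Definition Oprod L := \prod_(i < L) i.*2.+1.
Lemma Oprod_odd L : odd (Oprod L).
Proof.
rewrite /Oprod; elim: L => [|L IH]; first by rewrite big_ord0.
by rewrite big_ord_recr /= oddM IH /= odd_double.
Qed.
Lemma Oprod_gt0 L : 0 < Oprod L.
Proof. by rewrite /Oprod prodn_gt0. Qed.
Lemma Oprod_dvd L {p} : odd p -> p <= L -> p %| Oprod L.
Proof.
move=> op pL.
have Hi : p./2 < L by rewrite -(odd_double_half p) op in pL; lia.
rewrite /Oprod (bigD1 (Ordinal Hi)) //= -[p in p %| _](odd_double_half p) op.
by apply: dvdn_mulr.
Qed.
Lemma le_sumn bs b : b \in bs -> b <= sumn bs.
Proof.
elim: bs => [|c bs IH] //=; rewrite inE => /orP [/eqP ->|/IH]; lia.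
Qed.
Definition good (bs : seq nat) : bool :=
  all (fun b => prime b && (4 < b)) bs &&
  all (fun b => all (fun c => (b == c) || (prime (b + c + 1) && (b %% c != 1))) bs) bs.

Lemma goodE bs : good bs <-> ((forall b, b \in bs -> prime b /\ 4 < b) /\
   (forall b c, b \in bs -> c \in bs -> b <> c -> prime (b+c+1) /\ b %% c != 1)).
Proof.
rewrite /good; split.
  move/andP=> [/allP H1 /allP H2]; split.
    by move=> b /H1 /andP[].
  move=> b c bi ci bc; have /allP := H2 b bi; move/(_ c ci).
  by case: eqP => //= _ /andP[].
move=> [H1 H2]; apply/andP; split.
  by apply/allP=> b /H1 [-> ->].
apply/allP=> b bi; apply/allP=> c ci; case: eqP => //= bc.
by have [-> ->] := H2 b c bi ci bc.
Qed.

Lemma step bs N : DHL -> good bs -> exists n, (N <= n) && good (n :: bs).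
Proof.
move=> dhl /goodE [G1 G2].
set L := sumn bs + size bs + 5.
set O := Oprod L.
have O0 : 0 < O := Oprod_gt0 L.
have Oodd : odd O := Oprod_odd L.
set hs := [:: 0, O.-1 & map (fun b => b + 1) bs].
have bL : forall b, b \in bs -> b <= L by move=> b /le_sumn; rewrite /L; lia.
have adm : admissible hs.
  move=> p pp; case: (leqP p L) => pL.
    case: (even_prime pp) => [p2|podd].
      subst p; exists 1; split => //=.
      rewrite modn2 -(odd_double_half O) Oodd /= odd_double /=.
      rewrite all_map; apply/allP=> b bi /=.
      have [bp b4] := G1 b bi.
      case: (even_prime bp) => [b2|bo]; first lia.
      by rewrite modn2 addn1 /= bo.
    have p2 : 2 < p := odd_prime_gt2 podd pp.
    have pO : p %| O := Oprod_dvd L podd pL.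
    case: (boolP (p \in bs)) => pin.
      have [_ p4] := G1 p pin.
      exists 2; split; first lia.
      rewrite /= (modp1 O0 pO) all_map.
      apply/and3P; split; [by rewrite mod0n|apply/eqP; lia|].
      apply/allP=> b bi /=.
      case: (eqVneq b p) => [->|bp].
        by rewrite -modnDml modnn add0n modn_small //; lia.
      by apply: modS2; have [_ ->] := G2 b p bi pin (elimN eqP bp).
    exists 1; split; first lia.
    rewrite /= (modp1 O0 pO) all_map.
    apply/and3P; split; [by rewrite mod0n|apply/eqP; lia|].
    apply/allP=> b bi /=; apply/negP=> /eqP E.
    have : p %| b.
      apply/dvdnP; exists (b %/ p).
      have := divn_eq b p; have : b %% p = 0.
        rewrite -modnDml in E.
        have lt := ltn_pmod b (ltnW (ltnW p2)).
        case: (ltnP (b %% p + 1) p) => h.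
          rewrite modn_small in E => //; lia.
        have e : b %% p + 1 = p by lia.
        by rewrite e modnn in E.
      lia.
    have [bp _] := G1 b bi.
    move/(prime_nt_dvdP bp); rewrite (_ : (p != 1) = true); last by apply/eqP; lia.
    by move/(_ isT) => pb; rewrite pb bi in pin.
  apply: count_res; rewrite /hs /= size_map; lia.
have [n [Nn /allP Hn]] := dhl hs adm (maxn N L.+1).
have np : prime n by have := Hn 0; rewrite addn0; apply; rewrite inE eqxx.
have nO : prime (n + O.-1) by apply: Hn; rewrite !inE eqxx orbT.
have nb : forall b, b \in bs -> prime (n + b + 1).
  by move=> b bi; rewrite -addnA; apply: Hn; rewrite /hs !inE (map_f (fun b => b + 1) bi) !orbT.
exists n; apply/andP; split; first lia.
apply/goodE; split.
  move=> b; rewrite inE => /orP [/eqP ->|/G1] //; split => //; lia.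
have key : forall b, b \in bs -> n %% b != 1.
  move=> b bi; apply/negP=> /eqP E.
  have [bp b4] := G1 b bi.
  have bo : odd b by case: (even_prime bp) => // ?; lia.
  have bO : b %| O := Oprod_dvd L bo (bL b bi).
  have : b %| n + O.-1.
    have -> : n + O.-1 = n %/ b * b + O by have := divn_eq n b; lia.
    by rewrite dvdn_add // dvdn_mull.
  move/(prime_nt_dvdP nO); rewrite (_ : (b != 1) = true); last by apply/eqP; lia.
  have := bL b bi; lia.
move=> b c; rewrite !inE => /orP [/eqP ->|bi] /orP [/eqP ->|ci] bc //.
- split; first exact: nb. exact: key.
- split; first by rewrite (addnC b); exact: nb.
  have := bL b bi; have [_ b4] := G1 b bi => bl; rewrite modn_small; lia.
- exact: G2.
Qed.

Fixpoint build (g : seq nat -> nat -> nat) (k : nat) : seq nat :=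
  if k is k'.+1 then g (build g k') k' :: build g k' else [::].

Theorem mainTheorem1 :
  DHL ->
  exists B : nat -> Prop,
    infinite_set B /\
    (forall b, B b -> prime b) /\
    (forall b b', B b -> B b' -> b <> b' -> prime (b + b' + 1)).
Proof.
move=> dhl.
have H : forall bs N, exists n, good bs ==> ((N <= n) && good (n :: bs)).
  move=> bs N; case: (boolP (good bs)) => G; last by exists 0.
  by have [n Hn] := step bs N dhl G; exists n; rewrite Hn.
pose g bs N := ex_minn (H bs N).
have Hg : forall bs N, good bs -> (N <= g bs N) && good (g bs N :: bs).
  move=> bs N G; rewrite /g; case: ex_minnP => m /implyP Hm _; exact: Hm G.
have Gb : forall k, good (build g k).
  elim => [|k IH] //=; by case/andP: (Hg _ k IH).
have mono : forall k k', k <= k' -> {subset build g k <= build g k'}.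
  move=> k k' /subnK <-; elim: (k' - k) => [|d IH] //= x hx.
  by rewrite inE IH ?orbT.
exists (fun b => exists k, b \in build g k); split; [|split].
- move=> N; exists (g (build g N) N); split.
    by case/andP: (Hg _ N (Gb N)).
  by exists N.+1; rewrite /= inE eqxx.
- move=> b [k bk]; have /goodE [G1 _] := Gb k; by case: (G1 b bk).
- move=> b b' [k bk] [k' bk'] bb'.
  have /goodE [_ G2] := Gb (maxn k k').
  by have [] := G2 b b' (mono k _ (leq_maxl k k') b bk) (mono k' _ (leq_maxr k k') b' bk') bb'.
Qed.
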